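(* Let $A$ be a real $n\times n$ matrix, $\alpha>0$, and $F_{A,\alpha}(u)=|u|^\alpha Au$ for $u\in\mathbb R^n$. (i) If there exists $\lambda>0$ with $\|A-\lambda I_n\|_{\mathrm{op}}\le\frac{\lambda}{1+\alpha}$, then $F_{A,\alpha}$ is monotone. (ii) If there exists $\lambda>0$ with $\|A-\lambda I_n\|_{\mathrm{op}}<\frac{\lambda}{1+\alpha}$, then $F_{A,\alpha}$ is $(\alpha+2)$-monotone.
   Context: $|\cdot|$ is the Euclidean norm, $\|A\|_{\mathrm{op}}=\max_{|x|=1}|Ax|$. A map $F:\mathbb R^n\to\mathbb R^n$ is monotone if $(F(u)-F(v))\cdot(u-v)\ge0$ for all $u,v$; for $\beta>0$ it is $\beta$-monotone if there is $C>0$ with $(F(u)-F(v))\cdot(u-v)\ge C|u-v|^\beta$ for all $u,v$. *)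

(* Defs.v *)
From HB Require Import structures.
From mathcomp Require Import all_boot all_order all_algebra.
From mathcomp Require Import all_classical all_reals.
From mathcomp Require Import exp.
Set Implicit Arguments. Unset Strict Implicit. Unset Printing Implicit Defensive.
Import Order.TTheory GRing.Theory Num.Theory.
Local Open Scope ring_scope.
Local Open Scope classical_set_scope.

Section Defs.
Variables (R : realType) (n : nat).

Definition enorm (u : 'cV[R]_n) : R := Num.sqrt (\sum_i (u i 0) ^+ 2).

Definition dotv (u v : 'cV[R]_n) : R := \sum_i u i 0 * v i 0.

Definition opnorm (A : 'M[R]_n) : R :=
  sup [set enorm (A *m x) | x in [set x : 'cV[R]_n | enorm x = 1]].

Definition FA (A : 'M[R]_n) (alpha : R) (u : 'cV[R]_n) : 'cV[R]_n :=
  (enorm u `^ alpha) *: (A *m u).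

Definition monotone_map (F : 'cV[R]_n -> 'cV[R]_n) : Prop :=
  forall u v, 0 <= dotv (F u - F v) (u - v).

Definition beta_monotone (beta : R) (F : 'cV[R]_n -> 'cV[R]_n) : Prop :=
  exists C : R, 0 < C /\
    forall u v, C * (enorm (u - v) `^ beta) <= dotv (F u - F v) (u - v).

End Defs.

(* Main.v *)
Require Import Defs.
From HB Require Import structures.
From mathcomp Require Import all_boot all_order all_algebra.
From mathcomp Require Import all_classical all_reals.
From mathcomp Require Import sequences exp.
From mathcomp Require Import ring lra.
Import Order.TTheory GRing.Theory Num.Theory.
Set Implicit Arguments. Unset Strict Implicit.
Local Open Scope ring_scope.

Section Aux.
Variables (R : realType) (n : nat).
Implicit Types (u v w x y : 'cV[R]_n).

Lemma CS (f g : 'I_n -> R) :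
  (\sum_i f i * g i) ^+ 2 <= (\sum_i f i ^+ 2) * (\sum_i g i ^+ 2).
Proof.
set A := \sum_i f i ^+ 2; set B := \sum_i f i * g i; set C := \sum_i g i ^+ 2.
have A0 : 0 <= A by apply: sumr_ge0 => i _; exact: sqr_ge0.
have H : 0 <= \sum_i (A * g i - B * f i) ^+ 2 by apply: sumr_ge0 => i _; exact: sqr_ge0.
have E : \sum_i (A * g i - B * f i) ^+ 2 = A * (A * C - B ^+ 2).
  rewrite (eq_bigr (fun i => A^+2 * g i ^+ 2 - (2 * A * B) * (f i * g i) + B ^+ 2 * f i ^+ 2)); last by move=> i _; ring.
  rewrite big_split /= sumrB -!mulr_sumr -/A -/B -/C; ring.
rewrite E in H.
have [A0'|Apos] := eqVneq A 0.
  have fz : forall i, f i = 0.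
    move=> i; apply/eqP; rewrite -sqrf_eq0; apply/eqP.
    by apply: (psumr_eq0P _ A0') => // j _; exact: sqr_ge0.
  rewrite /B big1 ?expr0n ?A0' ?mul0r //; by move=> i _; rewrite fz mul0r.
have Ap : 0 < A by rewrite lt_def Apos A0.
rewrite -subr_ge0. by rewrite pmulr_rge0 in H.
Qed.


Lemma sumsq_ge0 u : 0 <= \sum_i u i 0 ^+ 2.
Proof. by apply: sumr_ge0 => i _; exact: sqr_ge0. Qed.

Lemma enorm_ge0 u : 0 <= enorm u.
Proof. exact: sqrtr_ge0. Qed.

Lemma enorm_sq u : enorm u ^+ 2 = dotv u u.
Proof. by rewrite /enorm sqr_sqrtr ?sumsq_ge0 // /dotv; apply: eq_bigr => i _; rewrite expr2. Qed.

Lemma dotvC u v : dotv u v = dotv v u.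
Proof. by apply: eq_bigr => i _; rewrite mulrC. Qed.

Lemma dotvBl u v w : dotv (u - v) w = dotv u w - dotv v w.
Proof. by rewrite /dotv -sumrB; apply: eq_bigr => i _; rewrite !mxE mulrBl. Qed.

Lemma dotvBr u v w : dotv w (u - v) = dotv w u - dotv w v.
Proof. by rewrite dotvC dotvBl !(dotvC w). Qed.

Lemma dotvZl k u v : dotv (k *: u) v = k * dotv u v.
Proof. by rewrite /dotv mulr_sumr; apply: eq_bigr => i _; rewrite !mxE mulrA. Qed.

Lemma dotvZr k u v : dotv v (k *: u) = k * dotv v u.
Proof. by rewrite dotvC dotvZl dotvC. Qed.

Lemma dotv_CS u v : `|dotv u v| <= enorm u * enorm v.
Proof.
have H := CS (fun i => u i 0) (fun i => v i 0).
have e1 : enorm u ^+ 2 = \sum_i u i 0 ^+ 2 by rewrite /enorm sqr_sqrtr ?sumsq_ge0.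
have e2 : enorm v ^+ 2 = \sum_i v i 0 ^+ 2 by rewrite /enorm sqr_sqrtr ?sumsq_ge0.
rewrite -e1 -e2 -/(dotv u v) in H.
have N : 0 <= enorm u * enorm v by rewrite mulr_ge0 ?enorm_ge0.
by rewrite -ler_sqr ?nnegrE ?normr_ge0 // real_normK ?num_real // exprMn.
Qed.

Lemma enormZ k u : enorm (k *: u) = `|k| * enorm u.
Proof.
rewrite /enorm -sqrtr_sqr -sqrtrM ?sqr_ge0 //; congr Num.sqrt.
by rewrite mulr_sumr; apply: eq_bigr => i _; rewrite !mxE exprMn.
Qed.

Lemma enorm_mul_bound (B : 'M[R]_n) u :
  enorm (B *m u) <= Num.sqrt (\sum_i \sum_j B i j ^+ 2) * enorm u.
Proof.
rewrite /enorm -sqrtrM; last by apply: sumr_ge0 => i _; apply: sumr_ge0 => j _; exact: sqr_ge0.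
apply: ler_wsqrtr; rewrite mulr_suml; apply: ler_sum => i _.
rewrite mxE; exact: CS (fun j => B i j) (fun j => u j 0).
Qed.


Lemma opnorm_bound (B : 'M[R]_n) u :
  enorm (B *m u) <= opnorm B * enorm u.
Proof.
set M := Num.sqrt (\sum_i \sum_j B i j ^+ 2).
have hub : has_ubound [set enorm (B *m x) | x in [set x : 'cV[R]_n | enorm x = 1]].
  exists M => z [y /= hy <-]; have := enorm_mul_bound B y; by rewrite hy mulr1.
have [e0|epos] := eqVneq (enorm u) 0.
  have := enorm_mul_bound B u; rewrite e0 !mulr0 => h.
  by apply: le_trans h _.
have ep : 0 < enorm u by rewrite lt_def epos enorm_ge0.
set y := (enorm u)^-1 *: u.
have hy : enorm y = 1 by rewrite enormZ ger0_norm ?invr_ge0 ?enorm_ge0 // mulVf.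
have h := ub_le_sup hub (ex_intro2 _ _ y hy erefl).
rewrite /opnorm; move: h; rewrite /y -scalemxAr enormZ ger0_norm ?invr_ge0 ?enorm_ge0 //.
by rewrite mulrC ler_pdivrMr.
Qed.

End Aux.

Section Sc.
Variable R : realType.

Lemma alg_main (al r s t Q N a b : R) :
  0 < al -> 0 <= s -> s <= r -> t ^+ 2 <= r ^+ 2 * s ^+ 2 ->
  0 <= Q -> Q ^+ 2 = r ^+ 2 - 2 * t + s ^+ 2 ->
  0 <= N -> N ^+ 2 = a ^+ 2 * r ^+ 2 - 2 * a * b * t + b ^+ 2 * s ^+ 2 ->
  0 <= b -> b <= a -> (a - b) * s ^+ 2 <= al * a * (r ^+ 2 - s ^+ 2) / 2 ->
  N * Q <= (1 + al) * (a * r ^+ 2 - (a + b) * t + b * s ^+ 2).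
Proof.
move=> al0 s0 sr ht Q0 hQ N0 hN b0 ba hF.
set D := a - b; set E := r ^+ 2 - s ^+ 2.
have D0 : 0 <= D by rewrite subr_ge0.
have E0 : 0 <= E by rewrite subr_ge0 lerXn2r // ?nnegrE //; apply: le_trans sr.
have r0 : 0 <= r by apply: le_trans sr.
set K := 2 * al * b + (1 + al) * D.
have K0 : 0 <= K by rewrite /K; nra.
have hdisc : D * r ^+ 2 <= (1 + al) * E * K.
  have e : D * r ^+ 2 = D * E + D * s ^+ 2 by rewrite /E; ring.
  rewrite e.
  have p1 : 0 <= E * b * (al * (3/2) + 2 * al ^+ 2) by rewrite !mulr_ge0 // addr_ge0 ?mulr_ge0 ?sqr_ge0 //; lra.
  have p2 : 0 <= E * D * (al * (3/2) + al ^+ 2) by rewrite !mulr_ge0 // addr_ge0 ?mulr_ge0 ?sqr_ge0 //; lra.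
  have eq : (1 + al) * E * K - (D * E + al * a * E / 2) = E * b * (al * (3/2) + 2 * al ^+ 2) + E * D * (al * (3/2) + al ^+ 2).
    by rewrite /K /D; field.
  have : D * s ^+ 2 <= al * a * E / 2 by [].
  lra.
have hud : r ^+ 2 - t <= r * Q.
  have h2 : (r ^+ 2 - t) ^+ 2 <= (r * Q) ^+ 2 by rewrite exprMn hQ; nra.
  have rQ0 : 0 <= r * Q by rewrite mulr_ge0.
  case: (lerP (r ^+ 2 - t) 0) => h; first by apply: le_trans h rQ0.
  by rewrite -ler_sqr ?nnegrE // ltW.
have hN2 : N ^+ 2 = b ^+ 2 * Q ^+ 2 + 2 * b * D * (r ^+ 2 - t) + D ^+ 2 * r ^+ 2.
  by rewrite hN hQ /D; ring.
have hNb : N <= b * Q + D * r.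
  have h0 : 0 <= b * Q + D * r by rewrite addr_ge0 ?mulr_ge0.
  rewrite -ler_sqr ?nnegrE // hN2.
  have : 0 <= 2 * b * D by rewrite !mulr_ge0.
  nra.
have hwd : a * r ^+ 2 - (a + b) * t + b * s ^+ 2 = b * Q ^+ 2 + D * (Q ^+ 2 + E) / 2.
  by rewrite hQ /D /E; field.
rewrite hwd.
have hphi : b * Q ^+ 2 + D * r * Q <= (1 + al) * (b * Q ^+ 2 + D * (Q ^+ 2 + E) / 2).
  have [K00|Kp] := eqVneq K 0.
    have bz : b = 0 by rewrite /K in K00; nra.
    have Dz : D = 0 by rewrite /K in K00; nra.
    rewrite bz Dz; lra.
  have Kp' : 0 < K by rewrite lt_def Kp K0.
  have h3 : D * (D * r ^+ 2) <= D * ((1 + al) * E * K) by rewrite ler_wpM2l.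
  have key : 0 <= K * ((1 + al) * (b * Q ^+ 2 + D * (Q ^+ 2 + E) / 2) - (b * Q ^+ 2 + D * r * Q)).
    have -> : K * ((1 + al) * (b * Q ^+ 2 + D * (Q ^+ 2 + E) / 2) - (b * Q ^+ 2 + D * r * Q))
      = ((K * Q - D * r) ^+ 2 + (D * ((1 + al) * E * K) - D * (D * r ^+ 2))) / 2.
      by rewrite /K; field.
    apply: divr_ge0 => //; apply: addr_ge0; [exact: sqr_ge0| by rewrite subr_ge0].
  by rewrite -subr_ge0; rewrite pmulr_rge0 in key.
have : N * Q <= (b * Q + D * r) * Q by rewrite ler_wpM2r.
move=> h; apply: le_trans h _; nra.
Qed.


Lemma powF1 (al r s : R) : 0 < al -> 0 <= s -> s <= r ->
  (r `^ al - s `^ al) * s ^+ 2 <= al * r `^ al * (r ^+ 2 - s ^+ 2) / 2.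
Proof.
move=> al0 s0 sr.
have [sz|sp] := eqVneq s 0.
  rewrite sz expr0n /= mulr0 subr0.
  apply: divr_ge0 => //; apply: mulr_ge0; [by rewrite mulr_ge0 ?powR_ge0 // ltW | by rewrite sqr_ge0].
have s0' : 0 < s by rewrite lt_def sp s0.
have r0 : 0 < r by apply: lt_le_trans sr.
have ea : r `^ al = expR (al * ln r) by rewrite /powR gt_eqF.
have eb : s `^ al = expR (al * ln s) by rewrite /powR gt_eqF.
have e1 : expR (al * ln s) = expR (al * ln r) * expR (al * (ln s - ln r)).
  by rewrite -expRD; congr expR; ring.
have h1 := expR_ge1Dx (al * (ln s - ln r)).
have hl : ln r - ln s <= r / s - 1.
  have -> : ln r - ln s = ln (1 + (r / s - 1)).
    rewrite [1 + _]addrC subrK lnM ?posrE ?invr_gt0 // lnV ?posrE //.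
  apply: le_ln1Dx; have : 0 < r / s by rewrite divr_gt0.
  lra.
set a := expR (al * ln r).
have a0 : 0 < a by rewrite expR_gt0.
have hb : a * (1 + al * (ln s - ln r)) <= s `^ al by rewrite eb e1 ler_wpM2l // ltW.
have h2 : r `^ al - s `^ al <= a * al * (r / s - 1).
  rewrite ea -/a.
  have : a * al * (ln r - ln s) <= a * al * (r / s - 1) by rewrite ler_wpM2l // mulr_ge0 // ltW.
  nra.
have h3 : (r `^ al - s `^ al) * s <= a * al * (r - s).
  have -> : a * al * (r - s) = a * al * (r / s - 1) * s by field; rewrite gt_eqF.
  by rewrite ler_wpM2r // ltW.
rewrite ea -/a in h3 *.
have h4 : (a - s `^ al) * s ^+ 2 <= a * al * (r - s) * s by rewrite expr2 mulrA ler_wpM2r // ltW.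
apply: le_trans h4 _.
have : 0 <= a * al * (r - s) ^+ 2 by rewrite mulr_ge0 ?sqr_ge0 // mulr_ge0 // ltW.
nra.
Qed.


Lemma SL0 (al r s t Q N : R) :
  0 < al -> 0 <= s -> s <= r -> t ^+ 2 <= r ^+ 2 * s ^+ 2 ->
  0 <= Q -> Q ^+ 2 = r ^+ 2 - 2 * t + s ^+ 2 ->
  0 <= N -> N ^+ 2 = (r `^ al) ^+ 2 * r ^+ 2 - 2 * (r `^ al) * (s `^ al) * t + (s `^ al) ^+ 2 * s ^+ 2 ->
  N * Q <= (1 + al) * (r `^ al * r ^+ 2 - (r `^ al + s `^ al) * t + s `^ al * s ^+ 2) /\
  Q `^ (al + 2) / (2 * 2 `^ al) <= r `^ al * r ^+ 2 - (r `^ al + s `^ al) * t + s `^ al * s ^+ 2.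
Proof.
move=> al0 s0 sr ht Q0 hQ N0 hN.
have r0 : 0 <= r by apply: le_trans sr.
have ba : s `^ al <= r `^ al by apply: ge0_ler_powR => //; apply: ltW.
split; first by apply: alg_main => //; [exact: powR_ge0 | exact: powF1].
set a := r `^ al; set b := s `^ al.
have b0 : 0 <= b by exact: powR_ge0.
have E0 : 0 <= r ^+ 2 - s ^+ 2 by rewrite subr_ge0 lerXn2r // ?nnegrE.
have hwd : a * Q ^+ 2 / 2 <= a * r ^+ 2 - (a + b) * t + b * s ^+ 2.
  have -> : a * r ^+ 2 - (a + b) * t + b * s ^+ 2 = a * Q ^+ 2 / 2 + b * Q ^+ 2 / 2 + (a - b) * (r ^+ 2 - s ^+ 2) / 2.
    by rewrite hQ; field.
  have : 0 <= (a - b) * (r ^+ 2 - s ^+ 2) by rewrite mulr_ge0 // subr_ge0.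
  have : 0 <= b * Q ^+ 2 by rewrite mulr_ge0 ?sqr_ge0.
  lra.
have hQ2 : Q <= 2 * r.
  have : Q ^+ 2 <= (2 * r) ^+ 2 by rewrite hQ; nra.
  by rewrite ler_sqr ?nnegrE // mulr_ge0.
have hQa : Q `^ al <= 2 `^ al * a.
  rewrite /a -powRM //; apply: ge0_ler_powR => //; [exact: ltW | rewrite nnegrE mulr_ge0 //].
have e2 : Q `^ (al + 2) = Q `^ al * Q ^+ 2.
  rewrite powRD; last by apply/implyP => h; exfalso; move/eqP: h; lra.
  by rewrite -powR_mulrn.
have p2 : 0 < 2 `^ al by apply: powR_gt0.
rewrite e2; apply: le_trans hwd.
rewrite ler_pdivrMr ?mulr_gt0 //.
have : Q `^ al * Q ^+ 2 <= 2 `^ al * a * Q ^+ 2 by rewrite ler_wpM2r ?sqr_ge0.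
have -> : a * Q ^+ 2 / 2 * (2 * 2 `^ al) = 2 `^ al * a * Q ^+ 2 by field.
done.
Qed.


Lemma SL (al r s t Q N : R) :
  0 < al -> 0 <= s -> 0 <= r -> t ^+ 2 <= r ^+ 2 * s ^+ 2 ->
  0 <= Q -> Q ^+ 2 = r ^+ 2 - 2 * t + s ^+ 2 ->
  0 <= N -> N ^+ 2 = (r `^ al) ^+ 2 * r ^+ 2 - 2 * (r `^ al) * (s `^ al) * t + (s `^ al) ^+ 2 * s ^+ 2 ->
  N * Q <= (1 + al) * (r `^ al * r ^+ 2 - (r `^ al + s `^ al) * t + s `^ al * s ^+ 2) /\
  Q `^ (al + 2) / (2 * 2 `^ al) <= r `^ al * r ^+ 2 - (r `^ al + s `^ al) * t + s `^ al * s ^+ 2.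
Proof.
move=> al0 s0 r0 ht Q0 hQ N0 hN.
case: (lerP s r) => sr; first exact: SL0.
have e : r `^ al * r ^+ 2 - (r `^ al + s `^ al) * t + s `^ al * s ^+ 2
  = s `^ al * s ^+ 2 - (s `^ al + r `^ al) * t + r `^ al * r ^+ 2 by ring.
rewrite e; apply: SL0 => //; [exact: ltW | by rewrite mulrC | by rewrite hQ; ring | by rewrite hN; ring].
Qed.

End Sc.

Section Main.
Variables (R : realType) (n : nat).

Lemma dotvDl (u v w : 'cV[R]_n) : dotv (u + v) w = dotv u w + dotv v w.
Proof. by rewrite /dotv -big_split; apply: eq_bigr => i _; rewrite !mxE mulrDl. Qed.

Lemma MAIN (A : 'M[R]_n) (al lam bp : R) (u v : 'cV[R]_n) :
  0 < al -> 0 <= bp ->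
  (forall x, enorm ((A - lam%:M) *m x) <= bp * enorm x) ->
  let d := u - v in
  let r := enorm u in let s := enorm v in let t := dotv u v in
  let wd := r `^ al * r ^+ 2 - (r `^ al + s `^ al) * t + s `^ al * s ^+ 2 in
  (lam - bp * (1 + al)) * wd <= dotv (FA A al u - FA A al v) d /\
  enorm d `^ (al + 2) / (2 * 2 `^ al) <= wd.
Proof.
move=> al0 bp0 hB d r s t wd.
set a := r `^ al; set b := s `^ al.
set w := a *: u - b *: v.
have hF : FA A al u - FA A al v = A *m w by rewrite /FA mulmxBr -!scalemxAr.
have hA : A *m w = (A - lam%:M) *m w + lam *: w by rewrite mulmxBl mul_scalar_mx subrK.
have r0 : 0 <= r := enorm_ge0 u.
have s0 : 0 <= s := enorm_ge0 v.
have ht : t ^+ 2 <= r ^+ 2 * s ^+ 2.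
  have := dotv_CS u v; rewrite -/t -/r -/s => h.
  have : 0 <= r * s by rewrite mulr_ge0.
  move: h; rewrite ler_norml => /andP[h1 h2] h3; nra.
have hr : dotv u u = r ^+ 2 by rewrite enorm_sq.
have hs : dotv v v = s ^+ 2 by rewrite enorm_sq.
have hvu : dotv v u = t by rewrite dotvC.
have hQ : enorm d ^+ 2 = r ^+ 2 - 2 * t + s ^+ 2.
  rewrite enorm_sq /d !dotvBl !dotvBr hr hs hvu -/t; ring.
have hN : enorm w ^+ 2 = a ^+ 2 * r ^+ 2 - 2 * a * b * t + b ^+ 2 * s ^+ 2.
  rewrite enorm_sq /w !dotvBl !dotvBr !dotvZl !dotvZr hr hs hvu -/t; ring.
have hwd : dotv w d = wd.
  rewrite /w /d !dotvBl !dotvBr !dotvZl hr hs hvu -/t /wd -/a -/b; ring.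
have [H1 H2] := SL al0 s0 r0 ht (enorm_ge0 d) hQ (enorm_ge0 w) hN.
split => //.
rewrite hF hA dotvDl dotvZl hwd.
have hcs := dotv_CS ((A - lam%:M) *m w) d.
have hb := hB w.
move: hcs; rewrite ler_norml => /andP[hc _].
have h1 : enorm ((A - lam%:M) *m w) * enorm d <= bp * enorm w * enorm d.
  by rewrite ler_wpM2r ?enorm_ge0.
have h2 : bp * (enorm w * enorm d) <= bp * ((1 + al) * wd) by rewrite ler_wpM2l // -/wd.
rewrite mulrA in h2.
lra.
Qed.
End Main.

Theorem mainTheorem11 (R : realType) (n : nat) (A : 'M[R]_n) (alpha : R) :
  0 < alpha ->
  ((exists lambda : R, 0 < lambda /\
      opnorm (A - lambda%:M) <= lambda / (1 + alpha)) ->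
    monotone_map (FA A alpha)) /\
  ((exists lambda : R, 0 < lambda /\
      opnorm (A - lambda%:M) < lambda / (1 + alpha)) ->
    beta_monotone (alpha + 2) (FA A alpha)).
Proof.
move=> al0.
have p1 : 0 < 1 + alpha by lra.
have p2 : 0 < 2 * 2 `^ alpha by rewrite mulr_gt0 // powR_gt0.
have gen : forall lam, 0 < lam -> forall u v,
    let bp := Num.max (opnorm (A - lam%:M)) 0 in
    (lam - bp * (1 + alpha)) * (enorm (u - v) `^ (alpha + 2) / (2 * 2 `^ alpha))
      <= dotv (FA A alpha u - FA A alpha v) (u - v) \/ lam - bp * (1 + alpha) < 0.
  move=> lam lam0 u v bp.
  have bp0 : 0 <= bp by rewrite le_max lexx orbT.
  have hB : forall x, enorm ((A - lam%:M) *m x) <= bp * enorm x.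
    move=> x; apply: le_trans (opnorm_bound _ x) _.
    by rewrite ler_wpM2r ?enorm_ge0 // le_max lexx.
  have [h1 h2] := MAIN u v al0 bp0 hB.
  case: (ltrP (lam - bp * (1 + alpha)) 0) => hc; [by right | left].
  apply: le_trans h1; exact: ler_wpM2l.
split.
  move=> [lam [lam0 hb]] u v.
  have hbp : Num.max (opnorm (A - lam%:M)) 0 * (1 + alpha) <= lam.
    rewrite -ler_pdivlMr // ge_max hb /=; apply: divr_ge0; lra.
  case: (gen lam lam0 u v) => /= h; last by lra.
  apply: le_trans h; apply: mulr_ge0; first lra.
  by apply: divr_ge0; [exact: powR_ge0 | exact: ltW].
move=> [lam [lam0 hb]].
set bp := Num.max (opnorm (A - lam%:M)) 0.
have hbp : bp * (1 + alpha) < lam.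
  rewrite -ltr_pdivlMr // gt_max hb /=; apply: divr_gt0 => //.
exists ((lam - bp * (1 + alpha)) / (2 * 2 `^ alpha)); split.
  apply: divr_gt0 => //; lra.
move=> u v.
case: (gen lam lam0 u v) => /= h; rewrite -/bp in h; last by lra.
apply: le_trans h; rewrite -/bp.
by rewrite mulrAC -mulrA.
Qed.
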